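(* Let $m,d,s$ be positive integers and $q$ a prime power with $d/m<q-1$, and let $\mathcal{C}=\mathcal{C}(m,d,s,q)$ be the multiplicity code. Let $A\subseteq\mathbb{F}_q^s$ be an interpolation set for homogeneous polynomials of degree at most $m-1$. Then for every $\boldsymbol{w}_0\in\mathbb{F}_q^s$, the set of coordinates $$R=\{\boldsymbol{w}_0+\lambda\boldsymbol{v}:\ \boldsymbol{v}\in A,\ \lambda\in\mathbb{F}_q\setminus\{0\}\}$$ is a recovering set for the coordinate indexed by $\boldsymbol{w}_0$; that is, for every codeword $\boldsymbol{y}=(y_{\boldsymbol{w}})_{\boldsymbol{w}\in\mathbb{F}_q^s}\in\mathcal{C}$, the symbol $y_{\boldsymbol{w}_0}$ is a function of $(y_{\boldsymbol{w}})_{\boldsymbol{w}\in R}$.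
   Context: For $\boldsymbol{i}=(i_1,\dots,i_s)$ a vector of nonnegative integers, $wt(\boldsymbol{i})=\sum_j i_j$ and $\boldsymbol{x}^{\boldsymbol{i}}=\prod_j x_j^{i_j}$. For $P\in\mathbb{F}_q[x_1,\dots,x_s]$, the $\boldsymbol{i}$-th Hasse derivative $P^{(\boldsymbol{i})}(\boldsymbol{x})$ is the coefficient of $\boldsymbol{z}^{\boldsymbol{i}}$ in $P(\boldsymbol{x}+\boldsymbol{z})\in\mathbb{F}_q[\boldsymbol{x},\boldsymbol{z}]$. Let $\Sigma=\mathbb{F}_q^{\binom{s+m-1}{s}}$ (indexed by the $\boldsymbol{i}$ with $wt(\boldsymbol{i})<m$), and $P^{(<m)}(\boldsymbol{w})=(P^{(\boldsymbol{i})}(\boldsymbol{w}))_{wt(\boldsymbol{i})<m}\in\Sigma$. The multiplicity code $\mathcal{C}(m,d,s,q)$ is the code of length $q^s$ over $\Sigma$ with coordinates indexed by $\mathbb{F}_q^s$, consisting of the words $(P^{(<m)}(\boldsymbol{w}))_{\boldsymbol{w}\in\mathbb{F}_q^s}$ for all $P\in\mathbb{F}_q[x_1,\dots,x_s]$ with $\deg(P)\le d$ (total degree). A polynomial is homogeneous if all its monomials have the same total degree. A set $A\subseteq\mathbb{F}_q^s$ is an interpolation set for homogeneous polynomials of degree at most $m-1$ if for every $0\le j\le m-1$, any two homogeneous polynomials of degree $j$ (allowing the zero polynomial) that agree on every point of $A$ are equal. *)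

(* Defs.v *)
From HB Require Import structures.
From mathcomp Require Import all_boot all_order all_algebra all_field.
From mathcomp Require Import mpoly.
Set Implicit Arguments. Unset Strict Implicit. Unset Printing Implicit Defensive.
Import GRing.Theory.
Local Open Scope ring_scope.

Notation point F s := {ffun 'I_s -> F}.

(* P(x+z) as a polynomial in z = (z_1..z_s) with coefficients in F[x_1..x_s]:
   substitute z_j |-> x_j + z_j in P (viewed with constant coefficients). *)
Definition shift_poly (F : finFieldType) (s : nat) (P : {mpoly F[s]})
  : {mpoly {mpoly F[s]}[s]} :=
  comp_mpoly [tuple ('X_j)%:MP + 'X_j | j < s] (map_mpoly (fun c : F => c%:MP_[s]) P).

(* i-th Hasse derivative P^(i) in F[x]: coefficient of z^i in P(x+z). *)
Definition hasse (F : finFieldType) (s : nat) (P : {mpoly F[s]}) (i : 'X_{1..s})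
  : {mpoly F[s]} := (shift_poly P)@_i.

(* Symbol of the multiplicity codeword of P at w, i.e. P^(<m)(w), as a function
   on multi-indices i; only indices with wt(i) = mdeg i < m are meaningful. *)
Definition same_symbol (F : finFieldType) (s m : nat) (P Q : {mpoly F[s]})
  (w : point F s) : Prop :=
  forall i : 'X_{1..s}, (mdeg i < m)%N -> (hasse P i).@[w] = (hasse Q i).@[w].

Definition homog_interpolation_set (F : finFieldType) (s m : nat)
  (A : {set point F s}) : Prop :=
  forall (j : nat), (j <= m.-1)%N -> forall P Q : {mpoly F[s]},
    P \is j.-homog -> Q \is j.-homog ->
    (forall v, v \in A -> P.@[v] = Q.@[v]) -> P = Q.

(* Total degree at most d (msize = 1 + total degree, 0 for the zero poly). *)
Definition deg_le (F : finFieldType) (s : nat) (P : {mpoly F[s]}) (d : nat) : bool :=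
  (msize P <= d.+1)%N.

Definition recovering_set (F : finFieldType) (s m d : nat)
  (R : {set point F s}) (w0 : point F s) : Prop :=
  forall P Q : {mpoly F[s]}, deg_le P d -> deg_le Q d ->
    (forall w, w \in R -> same_symbol m P Q w) -> same_symbol m P Q w0.

Definition line_point (F : finFieldType) (s : nat) (w0 : point F s) (lam : F)
  (v : point F s) : point F s := [ffun j => w0 j + lam * v j].

(* Main.v *)
Require Import Defs.
From HB Require Import structures.
From mathcomp Require Import all_boot all_order all_algebra all_field.
From mathcomp Require Import mpoly.
From mathcomp Require Import zify ring.
Set Implicit Arguments. Unset Strict Implicit. Unset Printing Implicit Defensive.
Import GRing.Theory.
Local Open Scope ring_scope.

Lemma hasseB (F : finFieldType) s (P Q : {mpoly F[s]}) i :
  hasse (P - Q) i = hasse P i - hasse Q i.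
Proof. by rewrite /hasse /shift_poly !raddfB. Qed.

Lemma mmap1_lin (F : finFieldType) s (c : 'I_s -> F) (Y : {poly F}) (i : 'X_{1..s}) :
  mmap1 (fun j => (c j)%:P * Y) i = (mmap1 c i)%:P * Y ^+ (mdeg i).
Proof.
rewrite /mmap1 mdegE -prodrXr rmorph_prod -big_split /=; apply: eq_bigr => j _.
by rewrite exprMn rmorphXn.
Qed.

Lemma size_mmap1 (F : finFieldType) s (y : 'I_s -> {poly F}) (i : 'X_{1..s}) :
  (forall j, size (y j) <= 2)%N -> (size (mmap1 y i) <= (mdeg i).+1)%N.
Proof.
move=> Hy; rewrite /mmap1 mdegE.
elim: (index_enum _) => [|j r IH]; first by rewrite !big_nil size_poly1.
rewrite !big_cons; apply: leq_trans (size_polyMleq _ _) _.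
have h1 := size_poly_exp_leq (y j) (i j).
have h2 : ((size (y j)).-1 * i j <= i j)%N.
  by rewrite -{2}[i j]mul1n leq_mul2r; have := Hy j; case: (size (y j)) => [|[|[|]]] //; rewrite orbT.
rewrite -subn1 leq_subLR; apply: leq_trans (leq_add h1 IH) _; move: h2; set t := muln _ _; set S := (\sum_(_ <- r) _)%N; lia.
Qed.

Lemma dvd_prod (F : finFieldType) (g : {poly F}) m (r : seq F) : uniq r ->
  (forall x, x \in r -> ('X - x%:P)^+m %| g) -> (\prod_(x <- r) ('X - x%:P))^+m %| g.
Proof.
elim: r => [|a r IH] /=; first by rewrite big_nil expr1n dvd1p.
case/andP => ar ur H; rewrite big_cons exprMn Gauss_dvdp.
  rewrite H ?mem_head // IH // => x xr; apply: H; by rewrite inE xr orbT.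
apply: coprimep_expl; apply: coprimep_expr.
by rewrite coprimep_sym coprimep_XsubC root_prod_XsubC ar.
Qed.

Lemma mpoly_morph_eq (F : finFieldType) s (S : comNzRingType) (phi psi : {mpoly F[s]} -> S) :
  (forall p q, phi (p + q) = phi p + phi q) -> (forall p q, phi (p * q) = phi p * phi q) ->
  (forall p q, psi (p + q) = psi p + psi q) -> (forall p q, psi (p * q) = psi p * psi q) ->
  phi 1 = 1 -> psi 1 = 1 ->
  (forall c, phi c%:MP = psi c%:MP) -> (forall i, phi 'X_i = psi 'X_i) -> forall p, phi p = psi p.
Proof.
move=> phiD phiM psiD psiM phi1 psi1 HC HX.
have zero: forall (f : {mpoly F[s]} -> S), (forall p q, f (p+q) = f p + f q) -> f 0 = 0.
  by move=> f fD; apply/(addrI (f 0)); rewrite -fD !addr0.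
have Xm: forall (f : {mpoly F[s]} -> S), (forall p q, f (p * q) = f p * f q) -> f 1 = 1 ->
    forall m, f 'X_[m] = \prod_i f 'X_i ^+ m i.
  move=> f fM f1 m; rewrite mpolyXE_id (big_morph f fM f1); apply: eq_bigr => i _.
  by elim: (m i) => [|k IH]; rewrite ?expr0 // !exprS fM IH.
elim/mpolyind => [|c m p _ _ IH]; first by rewrite (zero _ phiD) (zero _ psiD).
rewrite phiD psiD IH -mul_mpolyC phiM psiM (Xm phi) // (Xm psi) // HC.
by congr (_ * _ + _); apply: eq_bigr => i _; rewrite HX.
Qed.

Lemma taylor (F : finFieldType) s (P : {mpoly F[s]}) (a : 'I_s -> F) (z y : 'I_s -> {poly F}) :
  (forall j, y j = (a j)%:P + z j) ->
  mmap polyC y P = mmap (polyC \o meval a) z (shift_poly P).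
Proof.
move=> Hy.
apply: (@mpoly_morph_eq F s _ (mmap polyC y)
   (fun P => mmap (polyC \o meval a) z (shift_poly P))).
- by move=> p q; rewrite mmapD.
- by move=> p q; rewrite rmorphM.
- by move=> p q; rewrite /shift_poly !raddfD.
- by move=> p q; rewrite /shift_poly !rmorphM.
- by rewrite rmorph1.
- by rewrite /shift_poly !rmorph1.
- move=> c; rewrite mmapC /shift_poly map_mpolyC comp_mpolyC mmapC /= mevalC //.
- move=> i; rewrite mmapX mmap1U Hy /shift_poly.
  change (map_mpoly (fun c : F => c%:MP_[s]) 'X_i) with (map_mpoly (@mpolyC s F) 'X_i).
  rewrite map_mpolyX comp_mpolyXU -tnth_nth tnth_mktuple mmapD mmapC mmapX mmap1U /=.
  by rewrite mevalXU.
Qed.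

Definition tayl (F : finFieldType) s (H : {mpoly F[s]}) (w : 'I_s -> F) (k : nat) : {mpoly F[s]} :=
  \sum_(i <- msupp (shift_poly H) | mdeg i == k) (hasse H i).@[w] *: 'X_[i].

Lemma key (F : finFieldType) s m d (H : {mpoly F[s]}) (w0 v : point F s) :
  (d < m * (#|F| - 1))%N -> (msize H <= d.+1)%N ->
  (forall lam : F, lam != 0 -> forall i : 'X_{1..s}, (mdeg i < m)%N ->
     (hasse H i).@[line_point w0 lam v] = 0) ->
  forall k, (tayl H w0 k).@[v] = 0.
Proof.
move=> hd hH hvan k.
pose y := fun j => (v j)%:P * 'X + (w0 j)%:P.
pose g := mmap polyC y H.
have sg : (size g <= d.+1)%N.
  rewrite /g /mmap big_seq; apply: (big_ind (fun p : {poly F} => size p <= d.+1)%N).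
  - by rewrite size_poly0.
  - by move=> p q hp hq; apply: leq_trans (size_polyD _ _) _; rewrite geq_max hp hq.
  - move=> i iH; apply: leq_trans (size_polyMleq _ _) _.
    have h1 := size_polyC_leq1 (H@_i).
    have h2 : (size (mmap1 y i) <= (mdeg i).+1)%N.
      apply: size_mmap1 => j; rewrite /y size_MXaddC; case: ifP => // _.
      by rewrite ltnS size_polyC_leq1.
    have h3 := msize_mdeg_lt iH.
    move: h1 h2 h3 hH; set a := size ((H@_i)%:P : {poly F}); set b := size (mmap1 y i : {poly F}); lia.
have dv : forall lam : F, lam != 0 -> ('X - lam%:P)^+m %| g.
  move=> lam lam0.
  rewrite /g (@taylor F s H (line_point w0 lam v) (fun j => (v j)%:P * ('X - lam%:P)) y); last first.
    by move=> j; rewrite /y /line_point ffunE polyCD polyCM; ring.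
  rewrite /mmap; apply: (big_ind (fun p => ('X - lam%:P)^+m %| p)).
  - exact: dvdp0.
  - by move=> p q; apply: dvdp_add.
  move=> i _; rewrite mmap1_lin; case: (ltnP (mdeg i) m) => hi.
    have := hvan lam lam0 i hi; rewrite /hasse /= => ->.
    by rewrite mul0r dvdp0.
  by apply: dvdp_mull; apply: dvdp_mull; rewrite dvdp_exp2l.
have g0 : g = 0.
  apply/eqP; apply/negPn/negP => gn0.
  pose r := enum (predC1 (0 : F)).
  have hr : (\prod_(x <- r) ('X - x%:P))^+m %| g.
    apply: dvd_prod; first exact: enum_uniq.
    by move=> x; rewrite mem_enum => /= x0; apply: dv.
  have := dvdp_leq gn0 hr.
  have := size_exp (\prod_(x <- r) ('X - x%:P)) m.
  rewrite size_prod_XsubC /= /r -cardE cardC1.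
  move: sg hd; rewrite mulnC subn1; set t := muln _ _; set A := size ((\prod_(x <- r) ('X - x%:P))^+m : {poly F}); move=> h1 h2 h3 h4; have h5 := leq_trans h4 h1; clear -h2 h3 h5; lia.
have E := @taylor F s H w0 (fun j => (v j)%:P * 'X) y (fun j => addrC _ _).
rewrite -/g g0 in E.
have := congr1 (fun p : {poly F} => p`_k) E.
rewrite coef0 /mmap coef_sum.
under eq_bigr do rewrite mmap1_lin mulrA -polyCM coefCM coefXn.
move=> ->; rewrite /tayl raddf_sum /= big_mkcond; apply: eq_bigr => i _.
rewrite eq_sym; case: eqP => _; rewrite ?mulr1 ?mulr0 //.
by rewrite mevalZ mevalX.
Qed.

Theorem theorem1 (F : finFieldType) (m d s : nat) :
  (0 < m)%N -> (0 < d)%N -> (0 < s)%N ->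
  (d < m * (#|F| - 1))%N ->
  forall A : {set point F s}, homog_interpolation_set m A ->
  forall w0 : point F s,
    recovering_set m d
      [set line_point w0 lam v | v in A, lam in [set x : F | x != 0]]
      w0.
Proof.
move=> m0 d0 s0 hd A hA w0 P Q hP hQ hR i hi.
apply/eqP; rewrite -subr_eq0 -mevalB -hasseB; apply/eqP.
set H := P - Q.
have hH : (msize H <= d.+1)%N.
  apply: leq_trans (msizeD_le _ _) _; rewrite msizeN geq_max; exact/andP.
have Tk0 : forall k, (k < m)%N -> tayl H w0 k = 0.
  move=> k hk; apply: (hA k); first by lia.
  - rewrite /tayl; apply: (big_ind (fun p => p \is k.-homog)).
    + exact: dhomog0.
    + by move=> p q; apply: dhomogD.
    + by move=> j hj; apply: dhomogZ; rewrite dhomogX.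
  - exact: dhomog0.
  move=> v vA; rewrite meval0.
  apply: (key hd hH) => lam lam0 j hj.
  have lamin : lam \in [set x : F | x != 0] by rewrite inE.
  have := hR _ (imset2_f (fun v lam => line_point w0 lam v) vA lamin).
  move=> /(_ j hj) /eqP.
  by rewrite -subr_eq0 -mevalB -hasseB => /eqP.
case: (boolP (i \in msupp (shift_poly H))) => hi'; last first.
  by rewrite /hasse (memN_msupp_eq0 hi') meval0.
have := congr1 (mcoeff i) (Tk0 _ hi).
rewrite /tayl raddf_sum /= mcoeff0 big_mkcond (bigD1_seq i) ?msupp_uniq //= eqxx.
rewrite mcoeffZ mcoeffX eqxx mulr1 big1 ?addr0 // => j ji.
case: ifP => _ //; rewrite mcoeffZ mcoeffX (negbTE ji) mulr0 //.
Qed.
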